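(* There exist two players with additive valuations over a finite set of goods (where some single goods may have value $0$ to a player) such that no allocation is both EFX and Pareto optimal.
   Context: A valuation is a function $v:2^M\to\mathbb{R}_{\ge0}$ with $v(\emptyset)=0$ that is monotone: $v(S)\le v(T)$ whenever $S\subseteq T$. It is additive if $v(S)=\sum_{g\in S}v(\{g\})$ for all $S\subseteq M$. An allocation is an ordered partition $(A_1,\dots,A_n)$ of $M$; parts may be empty. It is EFX if for all players $i,j$ and every $g\in A_j$ we have $v_i(A_i)\ge v_i(A_j\setminus\{g\})$. It is Pareto optimal (PO) if there is no allocation $B$ with $v_i(B_i)\ge v_i(A_i)$ for all $i$ and $v_j(B_j)>v_j(A_j)$ for some $j$. *)

(* Defs.v *)
From HB Require Import structures.
From mathcomp Require Import all_boot all_order all_algebra.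
Set Implicit Arguments. Unset Strict Implicit. Unset Printing Implicit Defensive.
Import Order.TTheory GRing.Theory Num.Theory.
Local Open Scope ring_scope.

Definition is_valuation (R : realFieldType) (M : finType) (v : {set M} -> R) : Prop :=
  [/\ v set0 = 0,
      (forall S : {set M}, 0 <= v S) &
      (forall S T : {set M}, S \subset T -> v S <= v T)].

Definition is_additive (R : realFieldType) (M : finType) (v : {set M} -> R) : Prop :=
  forall S : {set M}, v S = \sum_(g in S) v [set g].

(* An allocation (A_1,...,A_n), an ordered partition of M with possibly
   empty parts, is represented by the assignment A : M -> 'I_n of goods to
   players; bundle i is [set g | A g == i]. *)
Definition bundle (M : finType) (n : nat) (A : {ffun M -> 'I_n}) (i : 'I_n) : {set M} :=
  [set g | A g == i].

Definition EFX (R : realFieldType) (M : finType) (n : nat)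
  (v : 'I_n -> {set M} -> R) (A : {ffun M -> 'I_n}) : Prop :=
  forall i j : 'I_n, forall g, g \in bundle A j ->
    v i (bundle A j :\ g) <= v i (bundle A i).

Definition PO (R : realFieldType) (M : finType) (n : nat)
  (v : 'I_n -> {set M} -> R) (A : {ffun M -> 'I_n}) : Prop :=
  ~ exists B : {ffun M -> 'I_n},
      (forall i, v i (bundle A i) <= v i (bundle B i)) /\
      (exists j, v j (bundle A j) < v j (bundle B j)).

(* Main.v *)
Require Import Defs.
From HB Require Import structures.
From mathcomp Require Import all_boot all_order all_algebra.
From mathcomp Require Import lra.
Import Order.TTheory GRing.Theory Num.Theory.
Local Open Scope ring_scope.

Section Ex.
Variable R : realFieldType.

Definition g0 : 'I_3 := @Ordinal 3 0 isT.
Definition g1 : 'I_3 := @Ordinal 3 1 isT.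
Definition g2 : 'I_3 := @Ordinal 3 2 isT.
Definition i0 : 'I_2 := @Ordinal 2 0 isT.
Definition i1 : 'I_2 := @Ordinal 2 1 isT.

Definition w (i : 'I_2) (g : 'I_3) : R :=
  if i == i0 then (if g == g0 then 0 else if g == g1 then 1 else 2)
  else (if g == g0 then 1 else if g == g1 then 0 else 2).

Lemma w_ge0 i g : 0 <= w i g.
Proof. rewrite /w; do 5 case: ifP => _ //. Qed.

Definition vv (i : 'I_2) (S : {set 'I_3}) : R := \sum_(g in S) w i g.

Lemma I2cases (x : 'I_2) : x = i0 \/ x = i1.
Proof. by case: x => [[|[|m]] Hm]; [left; apply/val_inj|right; apply/val_inj|]. Qed.

Lemma sum3 (F : 'I_3 -> R) (S : {set 'I_3}) :
  \sum_(g in S) F g = (if g0 \in S then F g0 else 0) + (if g1 \in S then F g1 else 0)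
     + (if g2 \in S then F g2 else 0).
Proof.
rewrite big_mkcond /= !big_ord_recl big_ord0 addr0 addrA.
have -> : lift (@ord0 2) (lift (@ord0 1) (@ord0 0)) = g2 by apply/val_inj.
have -> : lift (@ord0 2) (@ord0 1) = g1 by apply/val_inj.
by have -> : (@ord0 2) = g0 by apply/val_inj.
Qed.

Lemma vv_val i : is_valuation (vv i) /\ is_additive (vv i).
Proof.
split; first split.
- by rewrite /vv big_set0.
- by move=> S; apply: sumr_ge0 => g _; exact: w_ge0.
- move=> S T ST; rewrite /vv [X in _ <= X](big_setID S) /= (setIidPr ST).
  by rewrite lerDl; apply: sumr_ge0 => g _; exact: w_ge0.
- by move=> S; rewrite /vv; apply: eq_bigr => g _; rewrite big_set1.
Qed.

Lemma g_neq : (g0 == g1) = false /\ (g0 == g2) = false /\ (g1 == g2) = false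
  /\ (g1 == g0) = false /\ (g2 == g0) = false /\ (g2 == g1) = false
  /\ (i0 == i1) = false /\ (i1 == i0) = false.
Proof. by []. Qed.

End Ex.

Theorem theorem5p1 (R : realFieldType) :
  exists (M : finType) (v : 'I_2 -> {set M} -> R),
    (forall i, is_valuation (v i) /\ is_additive (v i)) /\
    (forall A : {ffun M -> 'I_2}, ~ (EFX v A /\ PO v A)).
Proof.
exists ('I_3 : finType), (@vv R); split; first exact: vv_val.
move=> A [Hefx Hpo].
have [n01 [n02 [n12 [n10 [n20 [n21 [m01 m10]]]]]]] := g_neq.
set B : {ffun 'I_3 -> 'I_2} :=
  [ffun g => if g == g0 then i1 else if g == g1 then i0 else A g].
have HB0 : B g0 = i1 by rewrite ffunE eqxx.
have HB1 : B g1 = i0 by rewrite ffunE n10 eqxx.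
have HB2 : B g2 = A g2 by rewrite ffunE n20 n21.
have E := fun (i j : 'I_2) => @sum3 R (w R i) (bundle A j).
have EB := fun (i j : 'I_2) => @sum3 R (w R i) (bundle B j).
have Er := fun (i j : 'I_2) (g : 'I_3) => @sum3 R (w R i) (bundle A j :\ g).
rewrite /vv in Hefx Hpo.

case: (I2cases (A g0)) => a0; case: (I2cases (A g1)) => a1;
  case: (I2cases (A g2)) => a2.
all: try (apply: Hpo; exists B; split;
  [ case=> [[|[|//]] Hi];
     [ have -> : Ordinal Hi = i0 by apply/val_inj
     | have -> : Ordinal Hi = i1 by apply/val_inj ];  rewrite ?E ?EB /bundle !inE ?HB0 ?HB1 ?HB2 ?a0 ?a1 ?a2 ?eqxx ?m01 ?m10 /w ?eqxx ?m01 ?m10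
       ?n01 ?n02 ?n12 ?n10 ?n20 ?n21 /=; lra
  | first [exists i0;  rewrite ?E ?EB /bundle !inE ?HB0 ?HB1 ?HB2 ?a0 ?a1 ?a2 ?eqxx ?m01 ?m10 /w ?eqxx ?m01 ?m10
       ?n01 ?n02 ?n12 ?n10 ?n20 ?n21 /=; lra | exists i1;  rewrite ?E ?EB /bundle !inE ?HB0 ?HB1 ?HB2 ?a0 ?a1 ?a2 ?eqxx ?m01 ?m10 /w ?eqxx ?m01 ?m10
       ?n01 ?n02 ?n12 ?n10 ?n20 ?n21 /=; lra] ]).
- have := Hefx i1 i0 g1; rewrite /bundle !inE a1 eqxx => /(_ isT).
  rewrite -/(bundle A i0) -/(bundle A i1) Er E;  rewrite ?E ?EB /bundle !inE ?HB0 ?HB1 ?HB2 ?a0 ?a1 ?a2 ?eqxx ?m01 ?m10 /w ?eqxx ?m01 ?m10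
       ?n01 ?n02 ?n12 ?n10 ?n20 ?n21 /=; lra.
- have := Hefx i0 i1 g0; rewrite /bundle !inE a0 eqxx => /(_ isT).
  rewrite -/(bundle A i0) -/(bundle A i1) Er E;  rewrite ?E ?EB /bundle !inE ?HB0 ?HB1 ?HB2 ?a0 ?a1 ?a2 ?eqxx ?m01 ?m10 /w ?eqxx ?m01 ?m10
       ?n01 ?n02 ?n12 ?n10 ?n20 ?n21 /=; lra.
Qed.
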